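(* Let $F$ be a field of characteristic zero and let $\mathcal{Q}$ be the additive group of rational numbers. Then the only Schur rings over $\mathcal{Q}$ are the group ring $F[\mathcal{Q}]$ and the symmetric Schur ring $F[\mathcal{Q}]^{\pm}$.
   Context: For finite $C\subseteq G$, $\overline{C}=\sum_{g\in C}g\in F[G]$ and $C^*=\{g^{-1}\mid g\in C\}$. A Schur ring over a group $G$ is an $F$-subspace $\mathfrak{S}=\operatorname{Span}_F\{\overline{C}\mid C\in\mathcal{D}(\mathfrak{S})\}$ of $F[G]$ where $\mathcal{D}(\mathfrak{S})$ is a partition of $G$ into finite sets such that (i) $\{1\}\in\mathcal{D}(\mathfrak{S})$; (ii) $C\in\mathcal{D}(\mathfrak{S})\Rightarrow C^*\in\mathcal{D}(\mathfrak{S})$; (iii) for all $C,D\in\mathcal{D}(\mathfrak{S})$, $\overline{C}\,\overline{D}=\sum_{E}\lambda_{CDE}\overline{E}$ with finitely many nonzero $\lambda_{CDE}\in F$. The group ring $F[G]$ is the Schur ring with partition into singletons; for abelian $G$, the symmetric Schur ring $F[G]^{\pm}$ is the Schur ring with partition $\{\{g,g^{-1}\}\mid g\in G\}$. *)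

(* Defs.v *)
From HB Require Import structures.
From mathcomp Require Import all_boot all_order all_algebra.
From mathcomp Require Import finmap.
Set Implicit Arguments. Unset Strict Implicit. Unset Printing Implicit Defensive.
Import Order.TTheory GRing.Theory Num.Theory.
Local Open Scope ring_scope.
Local Open Scope fset_scope.

(* The group G = (Q, +), written additively: identity 0, inverse of g is -g.
   A finite subset C of G is a {fset rat}.  An element of F[G] is represented
   by its coefficient function G -> F. *)

Definition csum (F : fieldType) (C : {fset rat}) : rat -> F :=
  fun g => (g \in C)%:R.

(* \overline{C} \overline{D} = sum_{c in C, d in D} (c + d), as a
   coefficient function. *)
Definition csum_mul (F : fieldType) (C D : {fset rat}) : rat -> F :=
  fun g => \sum_(c <- C) \sum_(d <- D) ((c + d == g)%:R : F).

Definition finv (C : {fset rat}) : {fset rat} := [fset - x | x in C].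

Definition is_partition (P : {fset rat} -> Prop) : Prop :=
  [/\ (forall C, P C -> C != fset0),
      (forall g : rat, exists C, P C /\ g \in C) &
      (forall C C' (g : rat), P C -> P C' -> g \in C -> g \in C' -> C = C')].

(* P is the partition D(S) of a Schur ring S over (Q,+) with coefficients in F. *)
Definition schur_partition (F : fieldType) (P : {fset rat} -> Prop) : Prop :=
  [/\ is_partition P,
      P [fset 0],
      (forall C, P C -> P (finv C)) &
      (forall C D, P C -> P D ->
         exists (Es : seq {fset rat}) (lam : {fset rat} -> F),
           (forall E, E \in Es -> P E) /\
           (forall g, csum_mul F C D g = \sum_(E <- Es) lam E * csum F E g))].

Definition group_ring_partition (C : {fset rat}) : Prop :=
  exists g : rat, C = [fset g].

Definition symmetric_partition (C : {fset rat}) : Prop :=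
  exists g : rat, C = [fset g; - g].

(* Main.v *)
Require Import Defs.
From HB Require Import structures.
From mathcomp Require Import all_boot all_order all_algebra all_field all_fingroup.
From mathcomp Require Import finmap zify ring.
From Stdlib Require Import Classical.
Import Order.TTheory GRing.Theory Num.Theory.
Local Open Scope ring_scope.

Set Implicit Arguments. Unset Strict Implicit. Unset Printing Implicit Defensive.

Definition NA (C D : {fset rat}) (g : rat) : nat :=
  (\sum_(c <- C) \sum_(d <- D) ((c + d)%R == g : nat))%N.

Definition good (P : {fset rat} -> Prop) :=
  [/\ is_partition P, P [fset 0]%fset, (forall C, P C -> P (Defs.finv C)) &
      (forall C D E g g', P C -> P D -> P E -> g \in E -> g' \in E ->
         NA C D g = NA C D g')].

Lemma natr_inj0 (F : fieldType) : [pchar F] =i pred0 -> forall m n : nat,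
  (m%:R : F) = n%:R -> m = n.
Proof.
move=> h0 m n; have h := (pcharf0P F).1 h0.
wlog le : m n / (m <= n)%N.
  by move=> W; case: (leqP m n) => [/W//|/ltnW /W H /esym /H].
move=> e; have := subnK le; move: (n - m)%N => k ek; subst n.
rewrite natrD in e.
have : (k%:R : F) == 0 by rewrite -[k%:R](addrK (m%:R : F)) -e subrr.
by rewrite h => /eqP ->.
Qed.

Lemma good_of (F : fieldType) (P : {fset rat} -> Prop) :
  [pchar F] =i pred0 -> schur_partition F P -> good P.
Proof.
move=> h0 [hp h1 h2 h3]; split => // C D E g g' PC PD PE gE g'E.
have [Es [lam [HEs Hg]]] := h3 C D PC PD.
apply: (@natr_inj0 F h0).
have Ecsum: forall h, csum_mul F C D h = (NA C D h)%:R.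
  by move=> h; rewrite /csum_mul /NA natr_sum; apply: eq_bigr => c _; rewrite natr_sum.
rewrite -!Ecsum !Hg; apply: eq_big_seq => E' /HEs PE'.
rewrite /csum; congr (_ * _%:R).
case: hp => _ _ hu.
have H1 : g \in E' -> g' \in E' by move=> h; have := hu _ _ _ PE' PE h gE => ->.
have H2 : g' \in E' -> g \in E' by move=> h; have := hu _ _ _ PE' PE h g'E => ->.
case: (boolP (g \in E')) => a; case: (boolP (g' \in E')) => b //.
  by rewrite (H1 a) in b.
by rewrite (H2 b) in a.
Qed.

Definition sc (P : {fset rat} -> Prop) (x y : rat) :=
  exists E, [/\ P E, x \in E & y \in E].

Definition closed (P : {fset rat} -> Prop) (X : rat -> Prop) :=
  forall x y, sc P x y -> X x -> X y.

Lemma cls_ex P : good P -> forall g, exists E, P E /\ g \in E.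
Proof. by case=> [[_ h _]] _ _ _. Qed.

Lemma cls_uniq P : good P -> forall E E' g, P E -> P E' -> g \in E -> g \in E' -> E = E'.
Proof. by case=> [[_ _ h]] _ _ _. Qed.

Lemma sc_refl P : good P -> forall x, sc P x x.
Proof. by move=> hP x; have [E [PE xE]] := cls_ex hP x; exists E. Qed.

Lemma sc_sym P x y : sc P x y -> sc P y x.
Proof. by case=> E [PE xE yE]; exists E. Qed.

Lemma sc_in P : good P -> forall E x y, P E -> x \in E -> sc P x y -> y \in E.
Proof.
move=> hP E x y PE xE [E' [PE' xE' yE']].
by rewrite (cls_uniq hP PE PE' xE xE').
Qed.

Lemma sc_trans P : good P -> forall x y z, sc P x y -> sc P y z -> sc P x z.
Proof.
move=> hP x y z [E [PE xE yE]] hyz; exists E; split => //.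
exact: (sc_in hP PE yE hyz).
Qed.

Lemma finvP (C : {fset rat}) x : (x \in Defs.finv C) = (- x \in C).
Proof.
apply/idP/idP.
  by case/imfsetP => y /= yC ->; rewrite opprK.
by move=> h; apply/imfsetP; exists (- x) => //; rewrite opprK.
Qed.

Lemma sc_opp P : good P -> forall x y, sc P x y -> sc P (- x) (- y).
Proof.
move=> [_ _ hi _] x y [E [PE xE yE]]; exists (Defs.finv E); split.
- exact: hi.
- by rewrite finvP opprK.
- by rewrite finvP opprK.
Qed.

Lemma sc0 P : good P -> forall y, sc P 0 y -> y = 0.
Proof.
move=> hP y h; have := sc_in hP (let: And4 _ h0 _ _ := hP in h0) (fset11 0) h.
by rewrite inE => /eqP.
Qed.

Lemma NA_sc P : good P -> forall C D g g', P C -> P D -> sc P g g' -> NA C D g = NA C D g'.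
Proof. by move=> [_ _ _ h] C D g g' PC PD [E [PE gE g'E]]; apply: h PE _ _. Qed.

Lemma NA_pos C D g : (0 < NA C D g)%N <-> exists c d, [/\ c \in C, d \in D & g = c + d].
Proof.
rewrite /NA lt0n sum_nat_seq_neq0; split.
  case/hasP => c cC /=; rewrite sum_nat_seq_neq0 => /hasP [d dD] /=.
  by rewrite eqb0 negbK => /eqP <-; exists c, d.
case=> c [d [cC dD ->]]; apply/hasP; exists c => //=.
rewrite sum_nat_seq_neq0; apply/hasP; exists d => //=.
by rewrite eqxx.
Qed.

Lemma closedD P : good P -> forall X Y, closed P X -> closed P Y ->
  closed P (fun g => exists a b, [/\ X a, Y b & g = a + b]).
Proof.
move=> hP X Y cX cY g g' hg [a [b [Xa Yb eg]]]; subst g.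
have [Ea [PEa aE]] := cls_ex hP a; have [Eb [PEb bE]] := cls_ex hP b.
have : (0 < NA Ea Eb (a + b))%N by apply/NA_pos; exists a, b.
rewrite (NA_sc hP PEa PEb hg) => /NA_pos [c [d [cE dE ->]]].
exists c, d; split => //.
  by apply: (cX a) => //; exists Ea.
by apply: (cY b) => //; exists Eb.
Qed.

Definition cc (P : {fset rat} -> Prop) (f : rat -> nat) := forall x y, sc P x y -> f x = f y.

Definition conv (f : rat -> nat) (D : {fset rat}) (g : rat) : nat :=
  (\sum_(d <- D) f (g - d)%R)%N.

Lemma sum_eq_count (s : seq rat) a : (\sum_(e <- s) (e == a : nat))%N = count_mem a s.
Proof. by elim: s => [|x s IH]; rewrite ?big_nil ?big_cons //= IH. Qed.

Lemma NA_conv E D g : NA E D g = conv (fun x => (x \in E : nat)) D g.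
Proof.
rewrite /NA /conv exchange_big /=; apply: eq_bigr => d _.
rewrite -(count_uniq_mem _ (fset_uniq E)) -sum_eq_count.
by apply: eq_bigr => e _; rewrite -(inj_eq (addIr (- d))) addrK.
Qed.

Lemma conv_cc P : good P -> forall D, P D -> forall n (S : {fset rat}) f,
  (#|`S| <= n)%N -> (forall g, f g != 0%N -> g \in S) -> cc P f -> cc P (conv f D).
Proof.
move=> hP D PD n; elim: n => [|n IH] S f hS supp hf.
  have f0 : forall g, f g = 0%N.
    move=> g; apply/eqP; apply: contraT => /supp.
    by move: hS; rewrite leqn0 cardfs_eq0 => /eqP ->; rewrite inE.
  by move=> x y _; rewrite /conv !big1 // => d _; rewrite f0.
case: (boolP (S == fset0)) => [/eqP S0 | /fset0Pn [h0 h0S]].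
  have f0 : forall g, f g = 0%N.
    by move=> g; apply/eqP; apply: contraT => /supp; rewrite S0 inE.
  by move=> x y _; rewrite /conv !big1 // => d _; rewrite f0.
have [E0 [PE0 h0E]] := cls_ex hP h0.
pose f' g := if g \in E0 then 0%N else f g.
have hf' : cc P f'.
  move=> x y hxy; rewrite /f'.
  case: (boolP (x \in E0)) => xE.
    by rewrite (sc_in hP PE0 xE hxy).
  case: (boolP (y \in E0)) => yE; last exact: hf.
  by rewrite (sc_in hP PE0 yE (sc_sym hxy)) in xE.
have supp' : forall g, f' g != 0%N -> g \in (S `\ h0)%fset.
  move=> g; rewrite /f'; case: (boolP (g \in E0)) => // gE /supp gS.
  rewrite !inE gS andbT; apply: contraNneq gE => ->; exact: h0E.
have hS' : (#|` (S `\ h0)%fset| <= n)%N.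
  by move: hS; rewrite (cardfsD1 h0 S) h0S.
have IH' := IH _ _ hS' supp' hf'.
have decomp : forall x, f x = (f' x + f h0 * (x \in E0))%N.
  move=> x; rewrite /f'; case: (boolP (x \in E0)) => xE.
    by rewrite muln1 add0n (hf h0 x) //; exists E0.
  by rewrite muln0 addn0.
have convE : forall g, conv f D g = (conv f' D g + f h0 * NA E0 D g)%N.
  move=> g; rewrite NA_conv /conv big_distrr -big_split /=.
  by apply: eq_bigr => d _; rewrite decomp.
move=> x y hxy; rewrite !convE (IH' x y hxy).
by rewrite (NA_sc hP PE0 PD hxy).
Qed.

Lemma floorE (x : rat) (z : int) : x = z%:~R -> Num.floor x = z.
Proof. by move=> ->; exact: intrKfloor. Qed.

Lemma lattice_ex (s : seq rat) : exists d B : int, (0 < d) /\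
  forall c, c \in s -> exists z : int, d%:~R * c = z%:~R /\ B <= z.
Proof.
elim: s => [|a s [d [B [d0 H]]]].
  by exists 1, 0; split => // c.
exists (d * denq a), (Order.min (B * denq a) (d * numq a)); split.
  by rewrite mulr_gt0 // denq_gt0.
move=> c; rewrite inE => /orP [/eqP -> | cs].
  exists (d * numq a); split.
    by rewrite !intrM numqE -mulrA [(denq a)%:~R * a]mulrC.
  by rewrite ge_min lexx orbT.
have [z [ez Bz]] := H c cs.
exists (z * denq a); split.
  by rewrite !intrM -ez mulrAC.
rewrite ge_min; apply/orP; left.
have := denq_gt0 a; nia.
Qed.

Fixpoint fk (C : {fset rat}) (k : nat) : rat -> nat :=
  match k with
  | 0 => fun g => (g == 0 : nat)
  | k'.+1 => conv (fk C k') C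
  end.

Fixpoint Sk (C : {fset rat}) (k : nat) : {fset rat} :=
  match k with
  | 0 => [fset 0]%fset
  | k'.+1 => [fset (a + c)%R | a in Sk C k', c in C]%fset
  end.

Lemma conv_neq0 f D g : conv f D g != 0%N -> exists2 d, d \in D & f (g - d) != 0%N.
Proof. by rewrite /conv sum_nat_seq_neq0 => /hasP [d dD /= h]; exists d. Qed.

Lemma fk_supp C k g : fk C k g != 0%N -> g \in Sk C k.
Proof.
elim: k g => [|k IH] g /=.
  by case: (boolP (g == 0)) => // /eqP -> _; rewrite inE.
case/conv_neq0 => c cC /IH h.
have -> : g = (g - c) + c by rewrite subrK.
by apply/imfset2P; exists (g - c) => //; exists c.
Qed.

Lemma fk_cc P : good P -> forall C, P C -> forall k, cc P (fk C k).
Proof.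
move=> hP C PC; elim=> [|k IH] /=.
  move=> x y hxy; congr nat_of_bool.
  case: (boolP (x == 0)) => [/eqP x0 | xn0].
    by subst x; rewrite (sc0 hP hxy) eqxx.
  case: (boolP (y == 0)) => [/eqP y0 | //]; subst y.
  by rewrite (sc0 hP (sc_sym hxy)) eqxx in xn0.
exact: (conv_cc hP PC (leqnn _) (@fk_supp C k) IH).
Qed.

Definition latt (C : {fset rat}) (d B : int) :=
  forall c, c \in C -> exists z : int, d%:~R * c = z%:~R /\ B <= z.

Lemma fk_latt C d B : latt C d B -> forall k g, fk C k g != 0%N ->
  exists z : int, d%:~R * g = z%:~R /\ k%:Z * B <= z.
Proof.
move=> hC; elim=> [|k IH] g /=.
  case: (boolP (g == 0)) => // /eqP -> _; exists 0; split.
    by rewrite mulr0.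
  by rewrite mul0r.
case/conv_neq0 => c cC /IH [z1 [e1 b1]].
have [z2 [e2 b2]] := hC c cC.
exists (z1 + z2); split.
  by rewrite intrD -e1 -e2 -mulrDr subrK.
move: b1 b2; lia.
Qed.

Definition QC (R : nzRingType) (C : {fset rat}) (d B : int) : {poly R} :=
  \sum_(c <- C) 'X^(absz (Num.floor (d%:~R * c) - B)).

Lemma fk_link (R : nzRingType) C d B : 0 < d -> latt C d B ->
  forall k g z, d%:~R * g = z%:~R -> k%:Z * B <= z ->
  (fk C k g)%:R = (QC R C d B ^+ k)`_(absz (z - k%:Z * B)%R).
Proof.
move=> d0 hC; elim=> [|k IH] g z egz bz /=.
  rewrite expr0 coef1 mul0r subr0; congr (_%:R); congr nat_of_bool.
  apply/eqP/eqP => [g0 | z0].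
    by move: egz; rewrite g0 mulr0 => /esym/eqP; rewrite intr_eq0 => /eqP ->.
  have z0' : z = 0 by apply/eqP; rewrite -absz_eq0 z0.
  move: egz; rewrite z0' => /eqP.
  by rewrite mulf_eq0 intr_eq0 (negbTE (lt0r_neq0 d0)) /= => /eqP.
rewrite /conv natr_sum exprSr /QC mulr_sumr coef_sum.
apply: eq_big_seq => c cC.
have [zc [ec bc]] := hC c cC.
rewrite (floorE ec) coefMXn.
have egc : d%:~R * (g - c) = (z - zc)%:~R by rewrite mulrBr egz ec intrB.
case: ltnP => hlt.
  case: (boolP (fk C k (g - c) == 0%N)) => [/eqP -> // | /(fk_latt hC)].
  case=> z' [e' b'].
  have zz : z' = z - zc by apply: (@intr_inj rat); rewrite -e' egc.
  move: hlt b' bz bc; rewrite zz; lia.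
have bk : k%:Z * B <= z - zc by move: hlt bz bc; lia.
rewrite (IH _ _ egc bk); congr (_ `_ _).
move: hlt bz bc bk; lia.
Qed.

Lemma sum_frob (R : comNzRingType) p (chp : p \in [pchar R]) (s : seq rat) (F : rat -> R) :
  (\sum_(c <- s) F c) ^+ p = \sum_(c <- s) F c ^+ p.
Proof.
have p0 : (0 < p)%N by apply: prime_gt0; case/andP: chp.
elim: s => [|a s IH].
  by rewrite !big_nil expr0n gtn_eqF.
rewrite !big_cons -!(pFrobenius_autE chp) pFrobenius_autD_comm; last exact: mulrC.
by rewrite !(pFrobenius_autE chp) IH.
Qed.

Lemma d_inj (d : int) (a b : rat) : 0 < d -> d%:~R * a = d%:~R * b -> a = b.
Proof. by move=> d0; apply: mulfI; rewrite intr_eq0 lt0r_neq0. Qed.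

Lemma frob_fk p C d B x : prime p -> 0 < d -> latt C d B -> x \in C ->
  forall g', fk C p g' = fk C p (p%:R * x) -> exists c, c \in C /\ g' = p%:R * c.
Proof.
move=> pp d0 hC xC g' hg'.
have p0 : (0 < p)%N by apply: prime_gt0.
pose R := 'F_p.
have chp : p \in [pchar {poly R}] by rewrite pchar_poly pchar_Fp.
pose e (c : rat) := absz (Num.floor (d%:~R * c) - B).
have QP : QC R C d B ^+ p = \sum_(c <- C) 'X^(e c * p).
  by rewrite /QC (sum_frob chp); apply: eq_bigr => c _; rewrite exprM.
have [zx [ex bx]] := hC x xC.
have epx : d%:~R * (p%:R * x) = (p%:Z * zx)%:~R.
  by rewrite mulrCA ex intrM.
have bpx : p%:Z * B <= p%:Z * zx by nia.
have L1 := fk_link R d0 hC epx bpx.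
rewrite QP coef_sum in L1.
have einj : forall c, c \in C -> (e x == e c) = (x == c).
  move=> c cC; have [zc [ec bc]] := hC c cC.
  rewrite /e (floorE ex) (floorE ec).
  apply/eqP/eqP => [h | xc].
    apply: (d_inj d0); rewrite ex ec; congr intmul; move: h bx bc; lia.
  have -> // : zx = zc by apply: (@intr_inj rat); rewrite -ex -ec xc.
have F1 : (fk C p (p%:R * x))%:R = 1 :> R.
  rewrite L1.
  have -> : absz (p%:Z * zx - p%:Z * B)%R = (e x * p)%N.
    by rewrite /e (floorE ex); move: bx; nia.
  rewrite (eq_big_seq (fun c => (x == c)%:R)); last first.
    by move=> c cC; rewrite coefXn eqn_pmul2r // einj.
  rewrite -natr_sum (eq_bigr (fun c => (c == x : nat))); last by move=> c _; rewrite eq_sym.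
  by rewrite sum_eq_count count_uniq_mem ?fset_uniq // xC.
have nz : fk C p g' != 0%N.
  apply/negP => /eqP h0; move: F1; rewrite -hg' h0 => /eqP.

  by rewrite eq_sym oner_eq0.
have [zg [eg bg]] := fk_latt hC nz.
have L2 := fk_link R d0 hC eg bg.
rewrite QP coef_sum hg' F1 in L2.
have [c cC hc] : exists2 c, c \in C & absz (zg - p%:Z * B)%R = (e c * p)%N.
  case: (boolP (has (fun c => absz (zg - p%:Z * B)%R == (e c * p)%N) C)).
    by case/hasP => c cC /eqP h; exists c.
  move/hasPn => hn; exfalso.
  rewrite big_seq big1 in L2; first by move/eqP: L2; rewrite oner_eq0.
  by move=> c cC; rewrite coefXn (negbTE (hn c cC)).
have [zc [ec bc]] := hC c cC.
rewrite /e (floorE ec) in hc.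
have zgE : zg = p%:Z * zc by move: hc bg bc; nia.
exists c; split => //; apply: (d_inj d0).
by rewrite eg zgE intrM mulrCA ec.
Qed.


Lemma mult_p P : good P -> forall p, prime p -> forall x y,
  sc P (p%:R * x) y -> exists z, sc P x z /\ y = p%:R * z.
Proof.
move=> hP p pp x y hxy.
have [C [PC xC]] := cls_ex hP x.
have [d [B [d0 hC]]] := lattice_ex C.
have hfk := fk_cc hP PC p hxy.
have [c [cC ->]] := frob_fk pp d0 hC xC (esym hfk).
by exists c; split => //; exists C.
Qed.

Lemma mult_nat P : good P -> forall n, (0 < n)%N -> forall x y,
  sc P (n%:R * x) y -> exists z, sc P x z /\ y = n%:R * z.
Proof.
move=> hP n; elim: n {-2}n (leqnn n) => [|N IH] n hn n0 x y hxy.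
  by move: hn n0; rewrite leqn0 => /eqP ->.
case: (ltnP 1 n) => n1; last first.
  have n_1 : n = 1%N by apply/eqP; rewrite eqn_leq n1 n0.
  rewrite n_1 mul1r in hxy *; exists y; split => //.
  by rewrite mul1r.
set p := pdiv n.
have pp : prime p by apply: pdiv_prime.
have pn : (p %| n)%N by apply: pdiv_dvd.
set m := (n %/ p)%N.
have nE : n = (p * m)%N by rewrite /m mulnC divnK.
have m0 : (0 < m)%N by move: n0; rewrite nE muln_gt0 => /andP [].
have mn : (m <= N)%N.
  have p1 : (1 < p)%N by apply: prime_gt1.
  move: hn m0 p1; rewrite nE; nia.
rewrite nE natrM -mulrA in hxy.
have [w [hw ->]] := mult_p hP pp hxy.
have [z [hz ->]] := IH m mn m0 _ _ hw.
by exists z; split => //; rewrite nE natrM mulrA.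
Qed.

Lemma mult_int P : good P -> forall n : int, n != 0 -> forall x y,
  sc P (n%:~R * x) y -> exists z, sc P x z /\ y = n%:~R * z.
Proof.
move=> hP [m|m] n0 x y hxy.
  apply: (mult_nat hP) => //; rewrite lt0n; apply: contraNneq n0 => ->. done.
move: hxy; rewrite NegzE mulNr => /(sc_opp hP); rewrite opprK => hxy.
have [z [hz e]] := mult_nat hP (ltn0Sn m) hxy.
by exists z; split => //; rewrite mulNr -e opprK.
Qed.

Lemma unit_int (q q' : int) : q * q' = 1 -> q = 1 \/ q = -1.
Proof.
move=> h; have := congr1 absz h; rewrite abszM => /eqP.
by rewrite muln_eq1 => /andP [/eqP h1 _]; lia.
Qed.

Definition Aset (C : {fset rat}) (g : rat) : Prop := g \in C \/ - g \in C \/ g = 0.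

Fixpoint Xk (C : {fset rat}) (k : nat) : rat -> Prop :=
  match k with
  | 0 => fun g => g = 0
  | k'.+1 => fun g => exists a b, [/\ Xk C k' a, Aset C b & g = a + b]
  end.

Definition Hs C g := exists k, Xk C k g.

Lemma Aset_closed P : good P -> forall C, P C -> closed P (Aset C).
Proof.
move=> hP C PC x y hxy [xC | [xC | x0]].
- by left; apply: (sc_in hP PC xC hxy).
- by right; left; apply: (sc_in hP PC xC (sc_opp hP hxy)).
- by right; right; subst x; exact: (sc0 hP hxy).
Qed.

Lemma Xk_closed P : good P -> forall C, P C -> forall k, closed P (Xk C k).
Proof.
move=> hP C PC; elim=> [|k IH] /=.
  by move=> x y hxy x0; subst x; exact: (sc0 hP hxy).
exact: (closedD hP IH (Aset_closed hP PC)).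
Qed.

Lemma Hs_closed P : good P -> forall C, P C -> closed P (Hs C).
Proof.
move=> hP C PC x y hxy [k hk]; exists k.
exact: (Xk_closed hP PC hxy hk).
Qed.

Lemma Xk_add C j k a b : Xk C j a -> Xk C k b -> Xk C (j + k) (a + b).
Proof.
elim: k b => [|k IH] b ha /=.
  by move=> ->; rewrite addn0 addr0.
case=> b' [c [hb' hc ->]]; rewrite addnS /=.
by exists (a + b'), c; split => //; [exact: IH | rewrite addrA].
Qed.

Lemma Aset_opp C b : Aset C b -> Aset C (- b).
Proof.
case=> [h | [h | h]]; [right; left | left | right; right]; rewrite ?opprK //.
by rewrite h oppr0.
Qed.

Lemma Xk_opp C k a : Xk C k a -> Xk C k (- a).
Proof.
elim: k a => [|k IH] a /=; first by move=> ->; rewrite oppr0.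
case=> a' [c [ha hc ->]]; exists (- a'), (- c); split.
- exact: IH.
- exact: Aset_opp.
- by rewrite opprD.
Qed.

Lemma Hs_add C a b : Hs C a -> Hs C b -> Hs C (a + b).
Proof. by move=> [j ha] [k hb]; exists (j + k)%N; apply: Xk_add. Qed.

Lemma Hs_opp C a : Hs C a -> Hs C (- a).
Proof. by move=> [k ha]; exists k; apply: Xk_opp. Qed.

Lemma Hs0 C : Hs C 0.
Proof. by exists 0%N. Qed.

Lemma Hs_in C c : c \in C -> Hs C c.
Proof. by move=> cC; exists 1%N; exists 0, c; split => //=; [left | rewrite add0r]. Qed.

Lemma Hs_muln C a (n : nat) : Hs C a -> Hs C (n%:R * a).
Proof.
move=> ha; elim: n => [|n IH]; first by rewrite mul0r; apply: Hs0.
by rewrite -addn1 natrD mulrDl mul1r; apply: Hs_add.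
Qed.

Lemma Hs_mulz C a (q : int) : Hs C a -> Hs C (q%:~R * a).
Proof.
move=> ha; case: q => n; first exact: Hs_muln.
by rewrite NegzE mulNr; apply: Hs_opp; apply: Hs_muln.
Qed.

Lemma Hs_latt C d B : latt C d B -> forall g, Hs C g -> exists z : int, d%:~R * g = z%:~R.
Proof.
move=> hC g [k]; elim: k g => [|k IH] g /=.
  by move=> ->; exists 0; rewrite mulr0.
case=> a [b [ha hb ->]]; have [za eza] := IH a ha.
have [zb ezb] : exists zb : int, d%:~R * b = zb%:~R.
  case: hb => [bC | [bC | ->]].
  - by have [z [ez _]] := hC b bC; exists z.
  - by have [z [ez _]] := hC _ bC; exists (- z); rewrite intrN -ez mulrN opprK.
  - by exists 0; rewrite mulr0.
by exists (za + zb); rewrite mulrDr eza ezb intrD.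
Qed.

Lemma ex_min (T : nat -> Prop) : (exists n, T n) -> exists n, T n /\ forall m, T m -> (n <= m)%N.
Proof.
case=> n; elim: n {-2}n (leqnn n) => [|N IH] n hn Tn.
  by exists n; split => // m _; move: hn; rewrite leqn0 => /eqP ->.
case: (classic (exists m, (m < n)%N /\ T m)) => [[m [mn Tm]] | H].
  by apply: (IH m) => //; move: mn hn; lia.
exists n; split => // m Tm; case: (leqP n m) => // mn.
by exfalso; apply: H; exists m.
Qed.

Lemma div_latt (d z : int) (g : rat) : 0 < d -> d%:~R * g = z%:~R -> g = z%:~R / d%:~R.
Proof.
move=> d0 e; rewrite -e mulrC mulKf //.
by rewrite intr_eq0 lt0r_neq0.
Qed.

Lemma gen_ex P : good P -> forall C, P C -> forall x, x \in C -> x != 0 ->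
  exists t, [/\ Hs C t, t != 0 & forall h, Hs C h -> exists q : int, h = q%:~R * t].
Proof.
move=> hP C PC x xC x0.
have [d [B [d0 hC]]] := lattice_ex C.
have dn0 : (d%:~R : rat) != 0 by rewrite intr_eq0 lt0r_neq0.
pose T n := (0 < n)%N /\ Hs C (n%:R / d%:~R).
have [zx [ex _]] := hC x xC.
have xE := div_latt d0 ex.
have zx0 : zx != 0 by apply: contraNneq x0 => z0; rewrite xE z0 mul0r.
have [n0 [[n0p Hn0] minn0]] : exists n, T n /\ forall m, T m -> (n <= m)%N.
  apply: ex_min; exists (absz zx); split; first by rewrite absz_gt0.
  rewrite natr_absz; case: (ltrP zx 0) => hz.
    rewrite ltr0_norm // intrN mulNr -xE; apply: Hs_opp; exact: Hs_in.
  by rewrite ger0_norm // -xE; apply: Hs_in.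
exists (n0%:R / d%:~R); split => //.
  by rewrite mulf_neq0 ?invr_eq0 // pnatr_eq0 -lt0n.
move=> h hh; have [z ez] := Hs_latt hC hh.
have n0z : (0 < n0%:Z) by [].
pose q := (z %/ n0%:Z)%Z; pose r := (z %% n0%:Z)%Z.
have zE := divz_eq z n0%:Z.
have r0 : 0 <= r by apply: modz_ge0; rewrite lt0r_neq0.
have rn : r < n0%:Z by apply: ltz_pmod.
have hr : Hs C (h - q%:~R * (n0%:R / d%:~R)).
  by apply: Hs_add => //; apply: Hs_opp; apply: Hs_mulz.
have er : d%:~R * (h - q%:~R * (n0%:R / d%:~R)) = r%:~R.
  rewrite mulrBr ez mulrCA [X in q%:~R * X]mulrCA divff // mulr1.
  apply: (@addIr _ (q%:~R * n0%:R)); rewrite subrK.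
  by rewrite {1}zE intrD intrM addrC.
have rz : r = 0.
  case: (eqVneq r 0) => // rn0; exfalso.
  have rp : 0 < r by rewrite lt0r rn0 r0.
  have : T (absz r).
    split; first by rewrite absz_gt0.
    by rewrite natr_absz ger0_norm ?ltW // -(div_latt d0 er).
  move/minn0; move: rn rp; lia.
exists q; apply: (d_inj d0).
rewrite ez mulrCA [X in q%:~R * X]mulrCA divff // mulr1 {1}zE -/q -/r rz addr0 intrM.
by [].
Qed.

Lemma class_pm P : good P -> forall x y, sc P x y -> y = x \/ y = - x.
Proof.
move=> hP x y hxy.
case: (eqVneq x 0) => [x0 | x0].
  by subst x; left; exact: (sc0 hP hxy).
have [C [PC xC]] := cls_ex hP x.
have [t [Ht t0 gen]] := gen_ex hP PC xC x0.
have HC : closed P (Hs C) := Hs_closed hP PC.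
have Kt : forall y', sc P t y' -> y' = t \/ y' = - t.
  move=> y' hty; have Hy' : Hs C y' := HC _ _ hty Ht.
  have [q eq] := gen y' Hy'.
  have q0 : q != 0.
    apply/negP => /eqP q0; move: hty; rewrite eq q0 mul0r => /sc_sym /(sc0 hP) t00.
    by rewrite t00 eqxx in t0.
  have := sc_sym hty; rewrite eq => h.
  have [z [hz ez]] := mult_int hP q0 h.
  have [q' eq'] := gen z (HC _ _ hz Ht).
  have qq : q * q' = 1.
    apply: (@intr_inj rat); apply: (mulIf t0).
    by rewrite intrM -mulrA -eq' -ez mul1r.
  by case/unit_int: qq => ->; [left; rewrite mul1r | right; rewrite mulNr mul1r].
have [m em] := gen x (Hs_in xC).
have m0 : m != 0.
  by apply/negP => /eqP m0; move: x0; rewrite em m0 mul0r eqxx.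
rewrite em in hxy; have [z [hz ->]] := mult_int hP m0 hxy.
by case: (Kt z hz) => ->; [left | right]; rewrite em ?mulrN.
Qed.

Definition Single P (x : rat) := forall y, sc P x y -> y = x.

Lemma single_class P : good P -> forall x E, Single P x -> P E -> x \in E -> E = [fset x]%fset.
Proof.
move=> hP x E sx PE xE; apply/fsetP => y; rewrite inE.
apply/idP/eqP => [yE | ->] //.
by apply: sx; exists E.
Qed.

Lemma single_add P : good P -> forall a b, Single P a -> Single P b -> Single P (a + b).
Proof.
move=> hP a b sa sb g' hg.
have [Ea [PEa aE]] := cls_ex hP a; have [Eb [PEb bE]] := cls_ex hP b.
have : (0 < NA Ea Eb (a + b))%N by apply/NA_pos; exists a, b.
rewrite (NA_sc hP PEa PEb hg) => /NA_pos [c [d [cE dE ->]]].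
by rewrite (single_class hP sa PEa aE) (single_class hP sb PEb bE) !inE in cE dE *;
  rewrite (eqP cE) (eqP dE).
Qed.

Lemma single_opp P : good P -> forall a, Single P a -> Single P (- a).
Proof.
move=> hP a sa g' hg; have := sc_opp hP hg; rewrite opprK => /sa <-.
by rewrite opprK.
Qed.

Lemma single_all P : good P -> forall x, x != 0 -> Single P x -> forall y, Single P y.
Proof.
move=> hP x x0 sx y.
have sxy : Single P (x + y).
  move=> g' hg.
  have [Ex [PEx xE]] := cls_ex hP x; have [Ey [PEy yE]] := cls_ex hP y.
  have : (0 < NA Ex Ey (x + y))%N by apply/NA_pos; exists x, y.
  rewrite (NA_sc hP PEx PEy hg) => /NA_pos [c [d [cE dE eg]]].
  move: cE; rewrite (single_class hP sx PEx xE) inE => /eqP ec; subst c.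
  have hyd : sc P y d by exists Ey.
  case: (class_pm hP hg) => // eg2.
  case: (class_pm hP hyd) => ed; subst d; first exact: eg.
  exfalso; move: eg2; rewrite eg opprD => /eqP; rewrite -subr_eq0.
  have -> : x - y - (- x - y) = x *+ 2 by ring.
  by rewrite mulrn_eq0 /= (negbTE x0).
have := single_add hP sxy (single_opp hP sx).
by rewrite addrAC subrr add0r.
Qed.

Lemma class_sym_eq P : good P -> (forall x, x != 0 -> sc P x (- x)) ->
  forall E g, P E -> g \in E -> E = [fset g; - g]%fset.
Proof.
move=> hP H E g PE gE; apply/fsetP => y; rewrite !inE.
apply/idP/idP => [yE | /orP [/eqP -> // | /eqP ->]].
  by case: (class_pm hP (ex_intro _ E (And3 PE gE yE))) => ->; rewrite eqxx ?orbT.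
case: (eqVneq g 0) => [g0 | g0]; first by rewrite g0 oppr0 -g0.
exact: (sc_in hP PE gE (H g g0)).
Qed.

Theorem corollary4p2 (F : fieldType) (charF0 : [pchar F] =i pred0)
    (P : {fset rat} -> Prop) :
  schur_partition F P ->
  (forall C, P C <-> group_ring_partition C) \/
  (forall C, P C <-> symmetric_partition C).
Proof.
move=> hS; have hP := good_of charF0 hS.
have Pne : forall C, P C -> C != fset0 by case: hP => [[h _ _]] _ _ _.
case: (classic (exists x, x != 0 /\ Single P x)) => [[x [x0 sx]] | H].
  left => C; split.
    move=> PC; have /fset0Pn [g gC] := Pne C PC.
    by exists g; apply: (single_class hP (single_all hP x0 sx (y:=g)) PC gC).
  case=> g ->; have [E [PE gE]] := cls_ex hP g.
  by rewrite -(single_class hP (single_all hP x0 sx (y:=g)) PE gE).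
have H' : forall x, x != 0 -> sc P x (- x).
  move=> x x0; apply: NNPP => hn; apply: H; exists x; split => // y hy.
  case: (class_pm hP hy) => // ey; subst y; exfalso; exact: hn.
right => C; split.
  move=> PC; have /fset0Pn [g gC] := Pne C PC.
  by exists g; apply: (class_sym_eq hP H' PC gC).
case=> g ->; have [E [PE gE]] := cls_ex hP g.
by rewrite -(class_sym_eq hP H' PE gE).
Qed.
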